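(* Let $a_n=1+3\binom{n+1}{2}$ ($n\ge0$) be the centered triangular numbers, with generating function $\frac{1+x+x^2}{(1-x)^3}$, let $b_n$ be the revert transform of $(a_n)$, and let $h_n=\det(b_{i+j})_{0\le i,j\le n}$ be its Hankel transform. Then for all $n\ge0$, $$\frac{h_n}{3^{\binom{n+1}{2}}}=A_{n+1},$$ where $A_m=\prod_{k=0}^{m-1}\frac{(3k+1)!}{(m+k)!}$ are the Robbins numbers.
   Context: For a power series $g(x)$ with $g(0)\ne0$, its revert transform is the sequence with generating function $\frac1x\mathrm{Rev}(xg(x))$, where $\mathrm{Rev}(f)$ is the compositional inverse of $f$ (the series $u$ with $f(u(x))=x$, $u(0)=0$). The Hankel transform of $(b_n)$ is $h_n=\det(b_{i+j})_{0\le i,j\le n}$. The Robbins numbers are $A_m=\prod_{k=0}^{m-1}\frac{(3k+1)!}{(m+k)!}$. *)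

(* Defs.v *)
(* Formal power series over rat are represented by their
   coefficient sequences nat -> rat. *)
From mathcomp Require Import all_boot all_order all_algebra.
Set Implicit Arguments. Unset Strict Implicit. Unset Printing Implicit Defensive.
Import Order.TTheory GRing.Theory Num.Theory.
Local Open Scope ring_scope.

Definition smul (f g : nat -> rat) : nat -> rat :=
  fun n => \sum_(i < n.+1) f i * g (n - i)%N.

Fixpoint spow (u : nat -> rat) (k : nat) : nat -> rat :=
  match k with
  | 0 => fun n => if n == 0%N then 1 else 0
  | k'.+1 => smul u (spow u k')
  end.

(* Coefficients of the composition f(u(x)), for u with u(0) = 0:
   [x^n] f(u) = sum_{k<=n} f_k [x^n] u^k. *)
Definition scomp (f u : nat -> rat) : nat -> rat :=
  fun n => \sum_(k < n.+1) f k * spow u k n.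

Definition xtimes (g : nat -> rat) : nat -> rat :=
  fun n => if n is n'.+1 then g n' else 0.

(* b is the revert transform of g: b has generating function
   (1/x) Rev(x g(x)), i.e. u := x b(x) satisfies u(0) = 0 and
   (x g)(u(x)) = x. *)
Definition is_revert (g b : nat -> rat) : Prop :=
  forall n, scomp (xtimes g) (xtimes b) n = (if n == 1%N then 1 else 0).

Definition ctri (n : nat) : rat := 1 + 3 * ('C(n.+1, 2))%:R.

Definition hankel (b : nat -> rat) (n : nat) : rat :=
  \det (\matrix_(i < n.+1, j < n.+1) b (i + j)%N).

Definition robbins (m : nat) : rat :=
  \prod_(k < m) (((3 * k).+1)`!%:R / ((m + k)`!)%:R).

(* Main.v *)
Require Import Defs.
From HB Require Import structures.
From mathcomp Require Import all_boot all_order all_algebra.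
From mathcomp Require Import boolp.
From mathcomp Require Import ring lra zify.
Set Implicit Arguments. Unset Strict Implicit. Unset Printing Implicit Defensive.
Import Order.TTheory GRing.Theory Num.Theory.
Local Open Scope ring_scope.

Definition fps := nat -> rat.
Definition fzero : fps := fun _ => 0.
Definition fadd (f g : fps) : fps := fun n => f n + g n.
Definition fopp (f : fps) : fps := fun n => - f n.
Definition fone : fps := fun n => if n == 0%N then 1 else 0.

Lemma faddA : associative fadd.
Proof. by move=> f g h; apply: funext => n; rewrite /fadd addrA. Qed.
Lemma faddC : commutative fadd.
Proof. by move=> f g; apply: funext => n; rewrite /fadd addrC. Qed.
Lemma fadd0 : left_id fzero fadd.
Proof. by move=> f; apply: funext => n; rewrite /fadd /fzero add0r. Qed.
Lemma faddN : left_inverse fzero fopp fadd.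
Proof. by move=> f; apply: funext => n; rewrite /fadd /fopp /fzero addNr. Qed.

HB.instance Definition _ := gen_eqMixin fps.
HB.instance Definition _ := gen_choiceMixin fps.
HB.instance Definition _ := GRing.isZmodule.Build fps faddA faddC fadd0 faddN.

Definition P (n : nat) (f : fps) : {poly rat} := \poly_(i < n.+1) f i.

Lemma smul_poly m n f g : (m <= n)%N -> smul f g m = (P n f * P n g)`_m.
Proof.
move=> le; rewrite coefM /smul; apply: eq_bigr => [[i /= hi]] _.
rewrite !coef_poly; have -> : (i < n.+1)%N by lia.
by have -> : (m - i < n.+1)%N by lia.
Qed.

Lemma coefP n f i : (i <= n)%N -> (P n f)`_i = f i.
Proof. by move=> h; rewrite coef_poly ltnS h. Qed.

Lemma smulA : associative smul.
Proof.
move=> f g h; apply: funext => n.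
have -> : smul f (smul g h) n = (P n f * (P n g * P n h))`_n.
  rewrite coefM /smul; apply: eq_bigr => [[i /= hi]] _.
  rewrite coefP; last by lia.
  by rewrite -smul_poly ?leq_subr.
have -> : smul (smul f g) h n = ((P n f * P n g) * P n h)`_n.
  rewrite coefM /smul; apply: eq_bigr => [[i /= hi]] _.
  rewrite (coefP _ (leq_subr i n)).
  by rewrite -smul_poly; last by lia.
by rewrite mulrA.
Qed.

Lemma smulC : commutative smul.
Proof.
move=> f g; apply: funext => n.
by rewrite (smul_poly _ _ (leqnn n)) mulrC -smul_poly.
Qed.

Lemma smul1 : left_id fone smul.
Proof.
move=> f; apply: funext => n; rewrite /smul big_ord_recl /= /fone /= mul1r subn0.
rewrite big1 ?addr0 // => i _; by rewrite /= mul0r.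
Qed.

Lemma smulDl : left_distributive smul fadd.
Proof.
move=> f g h; apply: funext => n; rewrite /smul /fadd -big_split /=.
by apply: eq_bigr => i _; rewrite mulrDl.
Qed.

Lemma fone_neq0 : fone != fzero.
Proof.
apply/eqP => /(congr1 (fun f => f 0%N)); rewrite /fone /fzero /=.
by move/eqP; rewrite oner_eq0.
Qed.

HB.instance Definition _ := GRing.Zmodule_isComNzRing.Build fps smulA smulC smul1 smulDl fone_neq0.

Lemma test (a b : fps) : (a + b) * (a - b) = a * a - b * b.
Proof. ring. Qed.

Lemma fmulE (f g : fps) n : (f * g) n = \sum_(i < n.+1) f i * g (n - i)%N.
Proof. by []. Qed.
Lemma faddE (f g : fps) n : (f + g) n = f n + g n.
Proof. by []. Qed.
Lemma foppE (f : fps) n : (- f) n = - f n.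
Proof. by []. Qed.
Lemma fsubE (f g : fps) n : (f - g) n = f n - g n.
Proof. by []. Qed.
Lemma foneE n : (1 : fps) n = if n == 0%N then 1 else 0.
Proof. by []. Qed.
Lemma fzeroE n : (0 : fps) n = 0.
Proof. by []. Qed.
Lemma fmulnE (f : fps) m n : (f *+ m) n = f n *+ m.
Proof. by elim: m => [|m IH] //; rewrite !mulrS faddE IH. Qed.

Definition X : fps := xtimes (1 : fps).

Lemma XmulE (f : fps) n : (X * f) n = if n is n'.+1 then f n' else 0.
Proof.
rewrite fmulE; case: n => [|n].
  by rewrite big_ord_recl big_ord0 /X /= mul0r addr0.
rewrite big_ord_recl big_ord_recl /= /X /= mul0r add0r mul1r.
rewrite big1 ?addr0; first by rewrite subSS subn0.
by move=> i _; rewrite /= /bump /= /fone /= mul0r.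
Qed.

Lemma xtimesE (f : fps) : xtimes f = X * f.
Proof. by apply: funext => n; rewrite XmulE. Qed.

Lemma Xcancel (f g : fps) : X * f = X * g -> f = g.
Proof. by move=> e; apply: funext => n; have := congr1 (fun h => h n.+1) e; rewrite !XmulE. Qed.

Lemma reg_lemma (f g : fps) : f * (1 - X * g) = 0 -> f = 0.
Proof.
move=> e.
have ef : f = X * (g * f) by apply/eqP; rewrite -subr_eq0; apply/eqP; rewrite -[RHS]e; ring.
suff H : forall n m, (m <= n)%N -> f m = 0 by apply: funext => n; exact: (H n n (leqnn n)).
elim=> [|n IH] m hm.
  by move: hm; rewrite leqn0 => /eqP ->; rewrite ef XmulE.
case: m hm => [|m] hm; first by rewrite ef XmulE.
rewrite ef XmulE fmulE big1 // => i _; rewrite IH ?mulr0 //; lia.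
Qed.

Lemma spowE (u : fps) k : spow u k = u ^+ k.
Proof. by elim: k => [|k IH] //=; rewrite exprS IH. Qed.

Lemma pow_low (u : fps) k m : u 0%N = 0 -> (m < k)%N -> (u ^+ k) m = 0.
Proof.
move=> u0; elim: k m => [|k IH] m hm //.
rewrite exprS fmulE big1 // => [[i hi]] _ /=.
case: i hi => [|i] hi; first by rewrite u0 mul0r.
rewrite IH ?mulr0 //; lia.
Qed.

Lemma scompE (f u : fps) n : scomp f u n = \sum_(k < n.+1) f k * (u ^+ k) n.
Proof. by rewrite /scomp; apply: eq_bigr => k _; rewrite spowE. Qed.

Definition sc (f u : fps) : fps := scomp f u.

Lemma scD (f g u : fps) : sc (f + g) u = sc f u + sc g u.
Proof.
apply: funext => n; rewrite faddE /sc /scomp -big_split /=.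
by apply: eq_bigr => k _; rewrite faddE mulrDl.
Qed.

Lemma scN (f u : fps) : sc (- f) u = - sc f u.
Proof.
apply: funext => n; rewrite foppE /sc /scomp -sumrN.
by apply: eq_bigr => k _; rewrite foppE mulNr.
Qed.

Lemma scB (f g u : fps) : sc (f - g) u = sc f u - sc g u.
Proof. by rewrite scD scN. Qed.

Lemma scMn (f u : fps) m : sc (f *+ m) u = sc f u *+ m.
Proof.
elim: m => [|m IH].
  apply: funext => n; rewrite /sc /scomp big1 // => k _; by rewrite mulr0n fzeroE mul0r.
by rewrite !mulrS scD IH.
Qed.

Lemma sc1 (u : fps) : sc 1 u = 1.
Proof.
apply: funext => n; rewrite /sc scompE big_ord_recl /= expr0 mul1r.
by rewrite big1 ?addr0 // => k _; rewrite foneE /= mul0r.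
Qed.

Lemma scX (f u : fps) : u 0%N = 0 -> sc (X * f) u = u * sc f u.
Proof.
move=> u0; apply: funext => n.
have E : sc (X * f) u n = \sum_(k < n.+1) f k * (u ^+ k.+1) n.
  rewrite /sc scompE big_ord_recl XmulE mul0r add0r.
  rewrite [RHS]big_ord_recr /= (pow_low u0 (ltnSn n)) mulr0 addr0.
  by apply: eq_bigr => k _; rewrite XmulE.
rewrite E fmulE.
under eq_bigr do rewrite exprS fmulE mulr_sumr.
rewrite exchange_big /=; apply: eq_bigr => [[i hi]] _ /=.
rewrite /sc scompE mulr_sumr.
rewrite (big_ord_widen_cond (n.+1) (fun _ => true) (fun k : nat => u i * (f k * (u ^+ k) (n - i)%N))); last by rewrite ltnS leq_subr.
rewrite [RHS]big_mkcond /=; apply: eq_bigr => [[k hk]] _ /=.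
case: ifP => h; first by ring.
rewrite (@pow_low u k (n - i)) ?mulr0 //; lia.
Qed.

Definition a : fps := ctri.

Lemma ctriS n : ctri n.+1 = ctri n + 3 * (n.+1)%:R.
Proof. by rewrite /ctri binS bin1 natrD; ring. Qed.

Lemma ctri0 : ctri 0 = 1.
Proof. by rewrite /ctri bin_small // mulr0 addr0. Qed.

Lemma ctri_rec : a = 1 + X + X * X + X * (a *+ 3) - X * (X * (a *+ 3)) + X * (X * (X * a)).
Proof.
apply: funext => n; rewrite !faddE !foppE !XmulE.
case: n => [|[|[|n]]]; rewrite /= ?XmulE ?fmulnE ?foneE /= /a; try (rewrite !XmulE /=).
all: rewrite ?ctriS ?ctri0 /=.
all: ring.
Qed.

Lemma XE n : X n = if n == 1%N then 1 else 0.
Proof. by case: n => [|[|n]]. Qed.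

Definition cub (b : fps) := (1 - X * b) ^+ 3 = b * (1 + X * b + (X * b) ^+ 2).

Lemma subr0_eq (x y : fps) : x - y = 0 -> x = y.
Proof. by move/eqP; rewrite subr_eq0 => /eqP. Qed.

Lemma rev_cub (b : fps) : is_revert ctri b <-> cub b.
Proof.
set u := X * b.
have u0 : u 0%N = 0 by rewrite /u XmulE.
set K := sc a u.
have eK : K = 1 + u + u * u + u * (K *+ 3) - u * (u * (K *+ 3)) + u * (u * (u * K)).
  have sX : sc X u = u by rewrite -[in LHS](mulr1 X) scX // sc1 mulr1.
  by rewrite /K {1}ctri_rec -/K !scD !scN !scX // !scMn sc1 sX.
have eK2 : K * (1 - u) ^+ 3 = 1 + u + u ^+ 2.
  have -> : K * (1 - u) ^+ 3 = K - (u * (K *+ 3) - u * (u * (K *+ 3)) + u * (u * (u * K))) by ring.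
  rewrite {1}eK; ring.
have eG : sc (X * a) u = u * K by rewrite scX.
have revE : is_revert ctri b <-> sc (X * a) u = X.
  split => [h|h].
    by apply: funext => n; rewrite XE -(h n) /sc /u -!xtimesE.
  by move=> n; rewrite -XE -h /sc /u -!xtimesE.
rewrite revE eG /cub; split => [h|h].
  apply: Xcancel; rewrite -/u; apply: subr0_eq.
  have -> : X * (1 - u) ^+ 3 = u * K * (1 - u) ^+ 3 by rewrite h.
  rewrite -mulrA eK2 /u; ring.
apply: subr0_eq.
apply: (@reg_lemma _ (b * (3%:R - u *+ 3 + u ^+ 2))).
have -> : 1 - X * (b * (3%:R - u *+ 3 + u ^+ 2)) = (1 - u) ^+ 3 by rewrite /u; ring.
rewrite mulrBl -mulrA eK2.
have -> : X * (1 - u) ^+ 3 = X * (b * (1 + X * b + (X * b) ^+ 2)) by rewrite h.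
rewrite /u; ring.
Qed.

Fixpoint cc (n : nat) : rat :=
  if n is n'.+1 then cc n' * (- (3 * (3 * n' + 2)%:R)) / (n'.+2)%:R else 1.
Definition c : fps := cc.

Lemma ccS n : cc n.+1 * (n.+2)%:R = - (3 * (3 * n + 2)%:R) * cc n.
Proof. by rewrite /= -mulrA mulVf ?mulr1 ?pnatr_eq0 // mulrC. Qed.

Definition D (f : fps) : fps := fun n => f n.+1 * (n.+1)%:R.

Lemma DM (f g : fps) : D (f * g) = D f * g + f * D g.
Proof.
apply: funext => n.
rewrite /D [(f * g) _](smul_poly _ _ (leqnn n.+1)) mulr_natr -coef_deriv derivM.
rewrite coefD !coefM faddE !fmulE; congr (_ + _); apply: eq_bigr => [[i hi]] _ /=.
  rewrite coef_deriv coefP; last by lia.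
  by rewrite coefP; [rewrite mulr_natr|lia].
rewrite coef_deriv coefP; last by lia.
rewrite coefP; last by lia.
by rewrite mulr_natr.
Qed.

Lemma DD (f g : fps) : D (f + g) = D f + D g.
Proof. by apply: funext => n; rewrite /D !faddE mulrDl. Qed.
Lemma DN (f : fps) : D (- f) = - D f.
Proof. by apply: funext => n; rewrite /D !foppE mulNr. Qed.
Lemma DMn (f : fps) m : D (f *+ m) = D f *+ m.
Proof. by apply: funext => n; rewrite /D !fmulnE mulrnAl. Qed.
Lemma D1 : D 1 = 0.
Proof. by apply: funext => n; rewrite /D foneE fzeroE mul0r. Qed.
Lemma DX : D X = 1.
Proof. apply: funext => n; rewrite /D !XE foneE; case: n => [|n] /=. by rewrite mul1r. by rewrite mul0r. Qed.

Lemma mul0E (f g : fps) : (f * g) 0%N = f 0%N * g 0%N.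
Proof. by rewrite fmulE big_ord1 subn0. Qed.

Lemma L9E (f : fps) n : ((1 + X *+ 9) * f) n = f n + (if n is n'.+1 then f n' else 0) *+ 9.
Proof. by rewrite mulrDl mul1r faddE mulrnAl fmulnE XmulE; case: n. Qed.

Definition w : fps := 1 + (X * c) *+ 3.

Lemma ode_w : (1 + X *+ 9) * D w = w *+ 3.
Proof.
apply: funext => n; rewrite L9E fmulnE /w /D !faddE !fmulnE !XmulE !foneE.
case: n => [|m] /=; first ring.
rewrite ?faddE ?fmulnE ?XmulE ?foneE /=.
have h : (m.+2)%:R != 0 :> rat by rewrite pnatr_eq0.
rewrite /c; field; by rewrite -natrD pnatr_eq0.
Qed.

Lemma ode_uniq (y : fps) : (1 + X *+ 9) * D y = y *+ 9 -> y 0%N = 0 -> y = 0.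
Proof.
move=> e y0.
suff H : forall n, y n = 0 by apply: funext => n; rewrite H.
elim=> [//|n IH].
have := congr1 (fun f => f n) e; rewrite L9E fmulnE IH /D mul0rn.
case: n IH => [|n] IH /=.
  by rewrite mulr1 addr0 => ->.
rewrite IH mul0r mul0rn addr0 => /eqP; rewrite mulf_eq0 pnatr_eq0 orbF => /eqP //.
Qed.

Lemma w3 : w ^+ 3 = 1 + X *+ 9.
Proof.
apply: subr0_eq; apply: ode_uniq.
  rewrite DD DN DD D1 DMn DX add0r.
  have -> : w ^+ 3 = w * (w * w) by rewrite !exprS expr0 mulr1.
  rewrite !DM.
  have -> : (1 + X *+ 9) * (D w * (w * w) + w * (D w * w + w * D w) - 1 *+ 9)
          = ((1 + X *+ 9) * D w) * (w * w) *+ 3 - (1 + X *+ 9) *+ 9 by ring.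
  rewrite ode_w; ring.
rewrite fsubE faddE foneE fmulnE XE /= mul0rn addr0.
by rewrite !exprS expr0 mulr1 !mul0E /w faddE fmulnE XmulE foneE /= mul0rn addr0 !mulr1 subrr.
Qed.

Lemma Ec : c + X * c ^+ 2 *+ 3 + X ^+ 2 * c ^+ 3 *+ 3 = 1.
Proof.
have h := w3; rewrite /w in h.
have e : X * ((c + X * c ^+ 2 *+ 3 + X ^+ 2 * c ^+ 3 *+ 3 - 1) *+ 9) = X * 0.
  rewrite mulr0; apply: subr0_eq; rewrite subr0.
  have -> : X * ((c + X * c ^+ 2 *+ 3 + X ^+ 2 * c ^+ 3 *+ 3 - 1) *+ 9)
          = (1 + X * c *+ 3) ^+ 3 - (1 + X *+ 9) by ring.
  by rewrite h subrr.
have := Xcancel e => e2.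
apply: subr0_eq; apply: funext => n.
have := congr1 (fun f => f n) e2; rewrite fmulnE fzeroE => /eqP.
by rewrite mulrn_eq0 /= => /eqP.
Qed.

Fixpoint ysol (h g : fps) (n : nat) : seq rat :=
  match n with
  | 0 => [:: h 0%N]
  | n'.+1 => let s := ysol h g n' in
             rcons s (h n'.+1 + \sum_(r < n'.+1) g r * nth 0 s (n' - r))
  end.

Definition ysf (h g : fps) : fps := fun n => nth 0 (ysol h g n) n.

Lemma size_ysol h g n : size (ysol h g n) = n.+1.
Proof. by elim: n => [|n IH] //=; rewrite size_rcons IH. Qed.

Lemma ysol_prefix h g n i : (i <= n)%N -> nth 0 (ysol h g n) i = ysf h g i.
Proof.
elim: n => [|n IH] hi.
  by move: hi; rewrite leqn0 => /eqP ->.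
move: hi; rewrite leq_eqVlt => /orP [/eqP -> //| lt].
by rewrite /= nth_rcons size_ysol lt IH.
Qed.

Lemma ysf_eq h g : ysf h g = h + X * (g * ysf h g).
Proof.
apply: funext => n; rewrite faddE XmulE; case: n => [|n].
  by rewrite addr0.
rewrite /ysf /= nth_rcons size_ysol ltnn eqxx fmulE; congr (_ + _).
by apply: eq_bigr => [[r hr]] _ /=; rewrite ysol_prefix // leq_subr.
Qed.

Definition b0 : fps := ysf c (- c).

Lemma b0p : b0 * (1 + X * c) = c.
Proof.
have e := ysf_eq c (- c); rewrite -/b0 in e.
apply: subr0_eq.
have -> : b0 * (1 + X * c) - c = b0 - (c + X * (- c * b0)) by ring.
by rewrite -e subrr.
Qed.

Lemma cub_b0 : cub b0.
Proof.
rewrite /cub; apply: subr0_eq.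
set p := 1 + X * c.
apply: (@reg_lemma _ (- (c *+ 3 + X * c ^+ 2 *+ 3 + X ^+ 2 * c ^+ 3))).
have -> : ((1 - X * b0) ^+ 3 - b0 * (1 + X * b0 + (X * b0) ^+ 2)) *
  (1 - X * - (c *+ 3 + X * c ^+ 2 *+ 3 + X ^+ 2 * c ^+ 3))
  = (p - X * (b0 * p)) ^+ 3 - (b0 * p) * (p ^+ 2 + X * (b0 * p) * p + X ^+ 2 * (b0 * p) ^+ 2)
  by rewrite /p; ring.
rewrite b0p /p.
have -> : (1 + X * c - X * c) ^+ 3 - c * ((1 + X * c) ^+ 2 + X * c * (1 + X * c) + X ^+ 2 * c ^+ 2)
  = 1 - (c + X * c ^+ 2 *+ 3 + X ^+ 2 * c ^+ 3 *+ 3) by ring.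
by rewrite Ec subrr.
Qed.

Lemma cub_uniq (b : fps) : cub b -> b * (1 + X * c) = c.
Proof.
rewrite /cub => e.
set p := 1 + X * c.
set be := b * p.
have Fb : (p - X * be) ^+ 3 - be * (p ^+ 2 + X * be * p + X ^+ 2 * be ^+ 2) = 0.
  have -> : (p - X * be) ^+ 3 - be * (p ^+ 2 + X * be * p + X ^+ 2 * be ^+ 2)
     = ((1 - X * b) ^+ 3 - b * (1 + X * b + (X * b) ^+ 2)) * p ^+ 3 by rewrite /be; ring.
  by rewrite e subrr mul0r.
have Fc : (p - X * c) ^+ 3 - c * (p ^+ 2 + X * c * p + X ^+ 2 * c ^+ 2) = 0.
  have -> : (p - X * c) ^+ 3 - c * (p ^+ 2 + X * c * p + X ^+ 2 * c ^+ 2)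
    = 1 - (c + X * c ^+ 2 *+ 3 + X ^+ 2 * c ^+ 3 *+ 3) by rewrite /p; ring.
  by rewrite Ec subrr.
apply: subr0_eq.
set g' := ((p - X * be) ^+ 2 + (p - X * be) * (p - X * c) + (p - X * c) ^+ 2)
          + c *+ 2 + X * c ^+ 2 + (be + c) * p + X * (be ^+ 2 + be * c + c ^+ 2).
apply: (@reg_lemma _ (- g')).
have -> : (be - c) * (1 - X * - g') =
  - (((p - X * be) ^+ 3 - be * (p ^+ 2 + X * be * p + X ^+ 2 * be ^+ 2)) -
     ((p - X * c) ^+ 3 - c * (p ^+ 2 + X * c * p + X ^+ 2 * c ^+ 2))) by rewrite /g' /p; ring.
by rewrite Fb Fc subrr oppr0.
Qed.

Lemma tauE (b : fps) m : (1 - X * b) m = if m is m'.+1 then - b m' else 1.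
Proof. by rewrite fsubE XmulE foneE; case: m => [|m] /=; rewrite ?subr0 ?sub0r. Qed.
Lemma sigE (f : fps) m : (1 + X * f) m = if m is m'.+1 then f m' else 1.
Proof. by rewrite faddE XmulE foneE; case: m => [|m] /=; rewrite ?addr0 ?add0r. Qed.

Lemma crec (b f : fps) : b * (1 + X * f) = f ->
  forall m, f m = b m + \sum_(r < m) b r * f (m.-1 - r)%N.
Proof.
move=> e m; rewrite -{1}e mulrDr mulr1 faddE mulrCA XmulE.
by case: m => [|m] //=; rewrite big_ord0.
Qed.

Lemma key_ij (b f : fps) : b * (1 + X * f) = f -> forall i j,
  \sum_(k < i.+1) (1 - X * b) (i - k)%N * f (k + j)%N =
  \sum_(l < j.+1) b (i + l)%N * (1 + X * f) (j - l)%N.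
Proof.
move=> e i j.
rewrite big_ord_recr big_ord_recr /= !subnn tauE sigE mul1r mulr1.
have h1 : \sum_(k < i) (1 - X * b) (i - k)%N * f (k + j)%N
        = - \sum_(k < i) b (i.-1 - k)%N * f (k + j)%N.
  rewrite -sumrN; apply: eq_bigr => [[k hk]] _ /=.
  have -> : (i - k = (i.-1 - k).+1)%N by lia.
  by rewrite tauE mulNr.
have h2 : \sum_(l < j) b (i + l)%N * (1 + X * f) (j - l)%N
        = \sum_(l < j) b (i + l)%N * f (j.-1 - l)%N.
  apply: eq_bigr => [[l hl]] _ /=.
  have -> : (j - l = (j.-1 - l).+1)%N by lia.
  by rewrite sigE.
rewrite h1 h2 (crec e (i + j)) big_split_ord /=.
have h3 : \sum_(r < i) b (lshift j r) * f ((i + j).-1 - lshift j r)%N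
        = \sum_(k < i) b (i.-1 - k)%N * f (k + j)%N.
  rewrite (reindex_inj rev_ord_inj) /=; apply: eq_bigr => [[k hk]] _ /=.
  have -> : (i - k.+1 = i.-1 - k)%N by lia.
  by have -> : ((i + j).-1 - (i.-1 - k) = k + j)%N by lia.
have h4 : \sum_(l < j) b (rshift i l) * f ((i + j).-1 - rshift i l)%N
        = \sum_(l < j) b (i + l)%N * f (j.-1 - l)%N.
  apply: eq_bigr => [[l hl]] _ /=.
  by have -> : ((i + j).-1 - (i + l) = j.-1 - l)%N by lia.
rewrite h3 h4; ring.
Qed.

Definition Hk (f : fps) n : 'M[rat]_n.+1 := \matrix_(i < n.+1, j < n.+1) f (i + j)%N.

Lemma sum_trunc N i (F : nat -> rat) : (i < N)%N ->
  \sum_(k < N) (if (k <= i)%N then F k else 0) = \sum_(k < i.+1) F k.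
Proof.
move=> hi; rewrite (big_ord_widen N F hi) [RHS]big_mkcond /=.
by apply: eq_bigr => k _; rewrite ltnS.
Qed.

Definition trigmx (g : fps) n : 'M[rat]_n.+1 :=
  \matrix_(i < n.+1, k < n.+1) (if (k <= i)%N then g (i - k)%N else 0).

Lemma det_trigmx (g : fps) n : g 0%N = 1 -> \det (trigmx g n) = 1.
Proof.
move=> g0; rewrite det_trig.
  by rewrite big1 // => i _; rewrite mxE leqnn subnn g0.
by apply/is_trig_mxP => i k lt; rewrite mxE; case: ifP => // h; lia.
Qed.

Lemma hankel_inv (b f : fps) n : b * (1 + X * f) = f -> \det (Hk b n) = \det (Hk f n).
Proof.
move=> e.
have E : trigmx (1 - X * b) n *m Hk f n = Hk b n *m (trigmx (1 + X * f) n)^T.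
  apply/matrixP => i j; rewrite !mxE.
  have -> : \sum_j0 trigmx (1 - X * b) n i j0 * Hk f n j0 j =
            \sum_(k < n.+1) (if (k <= i)%N then (1 - X * b) (i - k)%N * f (k + j)%N else 0).
    by apply: eq_bigr => k _; rewrite !mxE; case: ifP; rewrite ?mul0r.
  have -> : \sum_j0 Hk b n i j0 * (trigmx (1 + X * f) n)^T j0 j =
            \sum_(l < n.+1) (if (l <= j)%N then b (i + l)%N * (1 + X * f) (j - l)%N else 0).
    by apply: eq_bigr => k _; rewrite !mxE; case: ifP; rewrite ?mulr0.
  rewrite (sum_trunc (fun k => (1 - X * b) (i - k)%N * f (k + j)%N) (ltn_ord i)).
  rewrite (sum_trunc (fun l => b (i + l)%N * (1 + X * f) (j - l)%N) (ltn_ord j)).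
  exact: key_ij.
have := congr1 determinant E; rewrite !det_mulmx det_tr !det_trigmx ?mul1r ?mulr1 //.
  by rewrite sigE.
by rewrite tauE.
Qed.

Fixpoint qp (k i : nat) : rat :=
  if i is i'.+1 then qp k i' * (k.+1 + i')%:R / (3 * (3 * i' + 2))%:R else 1.
Definition Q (k i : nat) : rat := 'C(k, i)%:R * qp k i.

Ltac posnat := repeat (apply/andP; split); apply: lt0r_neq0; lra.
Ltac np n := have ? := ler0n rat n.

Lemma qp_shift k i : qp k.+1 i * (k.+1)%:R = qp k i * (k.+1 + i)%:R.
Proof.
elim: i => [|i IH] /=; first by rewrite addn0 mul1r.
have IH' : qp k.+1 i = qp k i * (k.+1 + i)%:R / (k.+1)%:R.
  by rewrite -IH mulfK // pnatr_eq0.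
np k; np i; rewrite IH'; field; posnat.
Qed.

Lemma Q_rel1 k i : Q k i * (k.+1 + i)%:R = (k.+1 - i)%:R * Q k.+1 i.
Proof.
have hb : (k.+1 * 'C(k, i))%:R = ((k.+1 - i) * 'C(k.+1, i))%:R :> rat.
  by rewrite (mul_bin_down k.+1 i).
rewrite /Q -mulrA -qp_shift.
have -> : 'C(k, i)%:R * (qp k.+1 i * k.+1%:R) = (k.+1 * 'C(k, i))%:R * qp k.+1 i :> rat.
  by rewrite natrM; ring.
by rewrite hb natrM; ring.
Qed.

Lemma Q_rel2 k i : Q k.+1 i.+1 * ((i.+1)%:R * (3 * (3 * i + 2))%:R) =
   (k.+1 - i)%:R * (k.+2 + i)%:R * Q k.+1 i.
Proof.
have hb : (i.+1 * 'C(k.+1, i.+1))%:R = ((k.+1 - i) * 'C(k.+1, i))%:R :> rat.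
  by rewrite (mul_bin_left k.+1 i).
np k; np i.
have -> : Q k.+1 i.+1 * ((i.+1)%:R * (3 * (3 * i + 2))%:R) =
   (i.+1 * 'C(k.+1, i.+1))%:R * qp k.+1 i * (k.+2 + i)%:R.
  rewrite /Q /= natrM; field; posnat.
by rewrite hb natrM /Q; ring.
Qed.

Lemma Q_zero k i : (k < i)%N -> Q k i = 0.
Proof. by move=> h; rewrite /Q bin_small // mul0r. Qed.

Lemma cS n : c n.+1 = c n * (- (3 * (3 * n + 2)%:R)) / (n.+2)%:R.
Proof. by []. Qed.

Definition Gz k j i : rat :=
  - (2 * (i + j).+1%:R * i%:R * (3 * i%:R - 1)) / (i + k).+1%:R * Q k.+1 i * c (i + j).

Lemma wz_step k j i :
  (3 * k + 2)%:R * (j + k + 2)%:R * Q k.+1 i * c (i + j) +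
  (j%:R - k%:R) * (3 * k + 4)%:R * Q k i * c (i + j) = Gz k j i.+1 - Gz k j i.
Proof.
case: (leqP i k.+1) => hi; last first.
  rewrite /Gz !Q_zero //; try lia. ring.
np k; np i; np j.
have r1 : Q k i = (k.+1 - i)%:R * Q k.+1 i / (k.+1 + i)%:R.
  by rewrite -Q_rel1 mulfK // pnatr_eq0 addSn.
have r2 : Q k.+1 i.+1 = (k.+1 - i)%:R * (k.+2 + i)%:R * Q k.+1 i /
            ((i.+1)%:R * (3 * (3 * i + 2))%:R).
  rewrite -Q_rel2 mulfK //; rewrite mulf_neq0 // pnatr_eq0 //.
  by rewrite muln_eq0 addn2.
rewrite /Gz r1 r2 (addSn i j) (cS (i + j)) natrB //.
field; posnat.
Qed.

Definition Vf k j := \sum_(i < k.+1) Q k i * c (i + j)%N.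

Lemma V_widen k j N : (k < N)%N -> \sum_(i < N) Q k i * c (i + j)%N = Vf k j.
Proof.
move=> h; rewrite /Vf (big_ord_widen N (fun i => Q k i * c (i + j)%N) h) [RHS]big_mkcond /=.
apply: eq_bigr => [[i hi]] _ /=; case: ifP => // hik.
by rewrite Q_zero ?mul0r //; lia.
Qed.

Lemma Vrec k j : (3 * k + 2)%:R * (j + k + 2)%:R * Vf k.+1 j +
   (j%:R - k%:R) * (3 * k + 4)%:R * Vf k j = 0.
Proof.
rewrite -(V_widen j (ltnSn k.+1)) -(V_widen j (ltnW (ltnSn k.+1))).
rewrite !mulr_sumr -big_split /=.
have -> : \sum_(i < k.+2) ((3 * k + 2)%:R * (j + k + 2)%:R * (Q k.+1 i * c (i + j)%N) +
      (j%:R - k%:R) * (3 * k + 4)%:R * (Q k i * c (i + j)%N))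
      = \sum_(i < k.+2) (Gz k j i.+1 - Gz k j i).
  by apply: eq_bigr => i _; rewrite -wz_step !mulrA.
rewrite -(big_mkord xpredT (fun i => Gz k j i.+1 - Gz k j i)) telescope_sumr //.
by rewrite /Gz Q_zero // !mulr0 mul0r oppr0 !mul0r subrr.
Qed.

Fixpoint Wf k j : rat :=
  if k is k'.+1 then Wf k' j * (- ((j%:R - k'%:R) * (3 * k' + 4)%:R)) /
                      ((3 * k' + 2)%:R * (j + k' + 2)%:R)
  else c j.

Lemma VW k j : Vf k j = Wf k j.
Proof.
elim: k => [|k IH].
  by rewrite /Vf big_ord1 /Q /= mul1r add0n.
have := Vrec k j; rewrite IH /= => e.
np k; np j.
have hd : (3 * k + 2)%:R * (j + k + 2)%:R != 0 :> rat.
  by rewrite mulf_neq0 // pnatr_eq0 addn2.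
apply: (mulIf hd); rewrite divfK //.
apply/eqP; rewrite -subr_eq0; apply/eqP; rewrite -e; ring.
Qed.

Lemma Wf_low k j : (j < k)%N -> Wf k j = 0.
Proof.
elim: k => [//|k IH] h /=.
case: (ltngtP j k) => hjk; first by rewrite IH ?mul0r.
  lia.
by rewrite hjk subrr mul0r oppr0 mulr0 mul0r.
Qed.

Lemma det_c n : \det (Hk c n) * \prod_(k < n.+1) Q k k = \prod_(k < n.+1) Wf k k.
Proof.
set Qm : 'M[rat]_n.+1 := \matrix_(k < n.+1, i < n.+1) Q k i.
set Wm : 'M[rat]_n.+1 := \matrix_(k < n.+1, j < n.+1) Wf k j.
have E : Qm *m Hk c n = Wm.
  apply/matrixP => k j; rewrite !mxE.
  under eq_bigr do rewrite !mxE.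
  by rewrite (V_widen j (ltn_ord k)) VW.
have dQ : \det Qm = \prod_(k < n.+1) Q k k.
  rewrite det_trig; first by apply: eq_bigr => i _; rewrite mxE.
  by apply/is_trig_mxP => i k lt; rewrite mxE Q_zero.
have dW : \det Wm = \prod_(k < n.+1) Wf k k.
  rewrite -det_tr det_trig; first by apply: eq_bigr => i _; rewrite !mxE.
  by apply/is_trig_mxP => i k lt; rewrite !mxE Wf_low.
by rewrite -dQ -dW -E det_mulmx mulrC.
Qed.

Definition fr (n : nat) : rat := (n`!)%:R.
Lemma frS n : fr n.+1 = fr n * (n.+1)%:R.
Proof. by rewrite /fr factS natrM mulrC. Qed.
Lemma fr_neq0 n : fr n != 0.
Proof. by rewrite /fr pnatr_eq0 -lt0n fact_gt0. Qed.

Ltac side := repeat (apply/andP; split);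
  first [ by rewrite pnatr_eq0 -lt0n fact_gt0 | by apply: lt0r_neq0; lra | done
        | by rewrite pnatr_eq0 | by apply: fr_neq0 ].

Definition A2 k : rat := \prod_(l < k) (3 * l + 2)%:R.
Definition A4 k : rat := \prod_(l < k) (3 * l + 4)%:R.
Lemma A2S k : A2 k.+1 = A2 k * (3 * k + 2)%:R.
Proof. by rewrite /A2 big_ord_recr. Qed.
Lemma A4S k : A4 k.+1 = A4 k * (3 * k + 4)%:R.
Proof. by rewrite /A4 big_ord_recr. Qed.
Lemma A2_neq0 k : A2 k != 0.
Proof. by elim: k => [|k IH]; rewrite ?A2S ?mulf_neq0 // ?pnatr_eq0 ?addn2 /A2 ?big_ord0 ?oner_eq0. Qed.

Lemma P3 k : A2 k * A4 k * 3%:R ^+ k * fr k = fr (3 * k).+1.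
Proof.
elim: k => [|k IH]; first by rewrite /A2 /A4 !big_ord0 /fr /= !mul1r.
rewrite A2S A4S exprS frS.
have -> : (3 * k.+1).+1 = (3 * k).+1.+3 by lia.
rewrite (frS (3 * k).+3) (frS (3 * k).+2) (frS (3 * k).+1) -IH; ring.
Qed.

Lemma c_closed k : c k = (- 3%:R) ^+ k * A2 k / fr k.+1.
Proof.
elim: k => [|k IH]; first by rewrite /A2 big_ord0 /fr /= !mul1r invr1.
rewrite cS IH A2S exprS (frS k.+1).
have := fr_neq0 k.+1; np k => h.
field; side.
Qed.

Ltac side2 := repeat (apply/andP; split);
  first [ by rewrite pnatr_eq0 -lt0n fact_gt0 | by apply: lt0r_neq0; lra | done
        | by rewrite pnatr_eq0 | by apply: fr_neq0 | by apply: A2_neq0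
        | by rewrite expf_neq0 ].

Lemma qp_closed k i : qp k i = fr (k + i) / fr k / (3%:R ^+ i * A2 i).
Proof.
elim: i => [|i IH]; first by rewrite addn0 /A2 big_ord0 expr0 mul1r divff ?fr_neq0 // invr1 div1r invr1.
rewrite /= IH A2S exprS (addnS k i) (frS (k + i)) -(addSn k i).
have := A2_neq0 i; np k; np i => h.
field; side2.
Qed.

Lemma Wf_closed k j : (k <= j)%N ->
  Wf k j = c j * (-1) ^+ k * (fr j / fr (j - k)) * A4 k * fr j.+1 / (A2 k * fr (j + k).+1).
Proof.
elim: k => [|k IH] h.
  rewrite /A2 /A4 !big_ord0 subn0 addn0 expr0 /=.
  have := fr_neq0 j; have := fr_neq0 j.+1 => h1 h2.
  field; side2.
rewrite /= IH; last by lia.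
have e1 : fr (j - k) = fr (j - k.+1) * (j - k)%:R.
  have -> : (j - k = (j - k.+1).+1)%N by lia.
  by rewrite frS.
rewrite e1 A2S A4S exprS (addnS j k) (frS (j + k).+1) natrB; last by lia.
have := A2_neq0 k; np k; np j => hA.
have hjk : (j - k)%:R != 0 :> rat by rewrite pnatr_eq0 subn_eq0 -ltnNge.
rewrite natrB in hjk; last by lia.
have := fr_neq0 j; have := fr_neq0 (j - k.+1); have := fr_neq0 (j + k).+1 => h1 h2 h3.
field; side2.
Qed.

Definition dk k : rat := 3%:R ^+ k * fr k * fr (3 * k).+1 / (fr (k + k).+1 * fr (k + k)).

Lemma Wd k : Wf k k = dk k * Q k k.
Proof.
rewrite Wf_closed // /Q binn mul1r qp_closed c_closed /dk -P3 subnn.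
have -> : (- 3%:R : rat) ^+ k = (-1) ^+ k * 3%:R ^+ k by rewrite -exprMn mulN1r.
have s1 : ((-1) ^+ k * (-1) ^+ k : rat) = 1 by rewrite -exprMn mulrNN mulr1 expr1n.
have := A2_neq0 k; have := fr_neq0 k; have := fr_neq0 k.+1;
  have := fr_neq0 (k + k); have := fr_neq0 (k + k).+1 => h1 h2 h3 h4 h5.
have h6 : (3%:R ^+ k : rat) != 0 by rewrite expf_neq0 // pnatr_eq0.
rewrite /fr /= in h1 h2 h3 h4 h5 *.
have -> : (-1) ^+ k * 3%:R ^+ k * A2 k / (k.+1)`!%:R * (-1) ^+ k * ((k`!)%:R / (0`!)%:R) * A4 k *
    (k.+1)`!%:R / (A2 k * (k + k).+1`!%:R) =
   ((-1) ^+ k * (-1) ^+ k) * 3%:R ^+ k * A2 k / (k.+1)`!%:R * ((k`!)%:R / (0`!)%:R) * A4 k *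
    (k.+1)`!%:R / (A2 k * (k + k).+1`!%:R) by ring.
rewrite s1 fact0 divr1; field; side2.
Qed.

Lemma robbinsE m : robbins m = (\prod_(k < m) fr (3 * k).+1) / \prod_(k < m) fr (m + k).
Proof. by rewrite /robbins prodf_div. Qed.

Lemma prod_fr_neq0 m s : \prod_(k < s) fr (m + k) != 0.
Proof. by rewrite prodf_seq_neq0; apply/allP => k _; rewrite fr_neq0. Qed.

Lemma robS m : robbins m.+1 = robbins m * (fr (3 * m).+1 * fr m / (fr (m + m) * fr (m + m).+1)).
Proof.
rewrite !robbinsE big_ord_recr /=.
have e1 : \prod_(k < m.+1) fr (m.+1 + k) = \prod_(k < m) fr (m.+1 + k) * fr (m + m).+1.
  by rewrite big_ord_recr /= addSn.
have e2 : \prod_(k < m.+1) fr (m + k) = fr m * \prod_(k < m) fr (m.+1 + k).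
  by rewrite big_ord_recl /= addn0; congr (_ * _); apply: eq_bigr => k _; rewrite addnS addSn.
have e3 : \prod_(k < m.+1) fr (m + k) = \prod_(k < m) fr (m + k) * fr (m + m).
  by rewrite big_ord_recr.
have e4 : \prod_(k < m) fr (m.+1 + k) = \prod_(k < m) fr (m + k) * fr (m + m) / fr m.
  by rewrite -e3 e2 [fr m * _]mulrC mulfK ?fr_neq0.
rewrite e1 e4.
have := prod_fr_neq0 m m; have := fr_neq0 m; have := fr_neq0 (m + m);
  have := fr_neq0 (m + m).+1 => h1 h2 h3 h4.
set A := \prod_(k < m) fr (3 * k).+1.
set B := \prod_(k < m) fr (m + k).
field; side2.
Qed.

Lemma prod_dk n : \prod_(k < n.+1) dk k = 3%:R ^+ 'C(n.+1, 2) * robbins n.+1.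
Proof.
elim: n => [|n IH].
  by rewrite big_ord1 /dk /robbins big_ord1 /fr (_ : 'C(1, 2) = 0)%N // !expr0 /=.
rewrite big_ord_recr /= IH (robS n.+1) /dk (binS n.+1 1) bin1 exprD.
have := fr_neq0 (n.+1 + n.+1); have := fr_neq0 (n.+1 + n.+1).+1 => h1 h2.
set R := robbins n.+1.
set T := (3%:R : rat) ^+ 'C(n.+1, 2).
set U := (3%:R : rat) ^+ n.+1.
field; side2.
Qed.

Lemma Qkk_neq0 k : Q k k != 0.
Proof.
rewrite /Q binn mul1r qp_closed.
by rewrite !(mulf_neq0, invr_neq0, fr_neq0, expf_neq0, A2_neq0).
Qed.

Theorem mainTheorem6 :
  (exists b : nat -> rat, is_revert ctri b) /\
  forall b : nat -> rat, is_revert ctri b ->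
    forall n : nat, hankel b n / 3 ^+ 'C(n.+1, 2) = robbins n.+1.
Proof.
split.
  by exists b0; apply/(rev_cub b0); exact: cub_b0.
move=> b hb n.
have e := cub_uniq ((rev_cub b).1 hb).
have -> : hankel b n = \det (Hk b n) by [].
rewrite (hankel_inv n e).
have hQ : \prod_(k < n.+1) Q k k != 0.
  by rewrite prodf_seq_neq0; apply/allP => k _; rewrite Qkk_neq0.
have := det_c n.
have -> : \prod_(k < n.+1) Wf k k = \prod_(k < n.+1) dk k * \prod_(k < n.+1) Q k k.
  by rewrite -big_split; apply: eq_bigr => k _; rewrite Wd.
move=> /(mulIf hQ) ->; rewrite prod_dk mulrC mulKf //.
by rewrite expf_neq0.
Qed.
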